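(* If $v_1$ and $v_2$ are submodular valuations on a finite set $X$ with disjoint supports (i.e., $v_i(\{x\})>0$ implies $v_j(\{x\})=0$ for $\{i,j\}=\{1,2\}$), then $v_1\vee v_2$ is submodular.
   Context: A valuation on a finite set $X$ is a function $v:2^X\to\mathbb{R}_{\ge 0}$ with $v(\emptyset)=0$ and monotone under inclusion; it is submodular if $v(A)+v(B)\ge v(A\cup B)+v(A\cap B)$ for all $A,B\subseteq X$. $(v_1\vee v_2)(S)=\max_{T\subseteq S}(v_1(T)+v_2(S\setminus T))$. *)

(* Defs.v *)
From mathcomp Require Import all_boot all_order all_algebra.
Set Implicit Arguments. Unset Strict Implicit. Unset Printing Implicit Defensive.
Import Order.TTheory GRing.Theory Num.Theory.
Local Open Scope ring_scope.

Definition valuation (R : realFieldType) (X : finType) (v : {set X} -> R) : Prop :=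
  [/\ v set0 = 0,
      (forall A, 0 <= v A) &
      (forall A B : {set X}, A \subset B -> v A <= v B)].

Definition submodular (R : realFieldType) (X : finType) (v : {set X} -> R) : Prop :=
  forall A B : {set X}, v (A :|: B) + v (A :&: B) <= v A + v B.

(* (v1 \/ v2)(S) = max_{T subset S} (v1 T + v2 (S \ T)).  The big max starts
   from 0, which is harmless since all terms are nonnegative for valuations
   (and T = set0 is always in the range). *)
Definition vjoin (R : realFieldType) (X : finType) (v1 v2 : {set X} -> R)
  (S : {set X}) : R :=
  \big[Num.max/0]_(T : {set X} | T \subset S) (v1 T + v2 (S :\: T)).

(* Main.v *)
Require Import Defs.
From mathcomp Require Import all_boot all_order all_algebra.
Import Order.TTheory GRing.Theory Num.Theory.
Local Open Scope ring_scope.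

Lemma zero_rem1 (R : realFieldType) (X : finType) (v : {set X} -> R) x B :
  valuation v -> submodular v -> v [set x] = 0 -> v (B :\ x) = v B.
Proof.
move=> [v0 vge vmono] vsub vx.
apply/eqP; rewrite eq_le vmono ?subsetDl //=.
have := vsub (B :\ x) [set x]; rewrite vx addr0.
have h1 : v B <= v (B :\ x :|: [set x]).
  by apply: vmono; apply/subsetP=> y yB; rewrite !inE yB; case: (y == x).
have h2 := vge ((B :\ x) :&: [set x]).
move=> h; apply: le_trans h1 _; apply: le_trans h; by rewrite lerDl.
Qed.

Lemma zero_rem (R : realFieldType) (X : finType) (v : {set X} -> R) :
  valuation v -> submodular v ->
  forall n (Z : {set X}), #|Z| = n -> (forall x, x \in Z -> v [set x] = 0) ->
  forall A, v (A :\: Z) = v A.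
Proof.
move=> vv vs; elim=> [|n IH] Z hZ hz A.
  by move/eqP: hZ; rewrite cards_eq0 => /eqP ->; rewrite setD0.
have [x xZ] : exists x, x \in Z.
  by apply/set0Pn; rewrite -card_gt0 hZ.
have -> : Z = x |: (Z :\ x) by rewrite setD1K.
rewrite setUC -setDDl zero_rem1 //; last exact: hz.
apply: IH; first by move: hZ; rewrite (cardsD1 x) xZ add1n => -[].
by move=> y; rewrite inE => /andP [_ /hz].
Qed.

Lemma zero_remZ (R : realFieldType) (X : finType) (v : {set X} -> R) (Z : {set X}) A :
  valuation v -> submodular v -> (forall x, x \in Z -> v [set x] = 0) ->
  v (A :\: Z) = v A.
Proof. move=> vv vs hz; exact: (@zero_rem R X v vv vs #|Z| Z erefl hz A). Qed.

Theorem proposition4 (R : realFieldType) (X : finType) (v1 v2 : {set X} -> R) :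
  valuation v1 -> valuation v2 -> submodular v1 -> submodular v2 ->
  (forall x : X, 0 < v1 [set x] -> v2 [set x] = 0) ->
  (forall x : X, 0 < v2 [set x] -> v1 [set x] = 0) ->
  submodular (vjoin v1 v2).
Proof.
move=> vv1 vv2 vs1 vs2 d12 d21.
have E : forall S, vjoin v1 v2 S = v1 S + v2 S.
  move=> S; case: (vv1) => [_ g1 m1]; case: (vv2) => [_ g2 m2].
  apply/eqP; rewrite eq_le; apply/andP; split.
    apply: bigmax_le; first by rewrite addr_ge0.
    move=> T TS; apply: lerD; first exact: m1.
    by apply: m2; rewrite subsetDl.
  set Z1 := [set x | v1 [set x] == 0].
  have -> : v1 S + v2 S = v1 (S :\: Z1) + v2 (S :\: (S :\: Z1)).
    congr (_ + _).
      by rewrite zero_remZ // => x; rewrite inE => /eqP.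
    rewrite setDDr setDv set0U -[Z1]setCK -setDE zero_remZ // => x.
    rewrite !inE => hx; apply: d12; by rewrite lt_def hx g1.
  rewrite /vjoin. have := (@le_bigmax_cond _ R {set X} 0 (S :\: Z1) (fun T => T \subset S) (fun T => v1 T + v2 (S :\: T))). rewrite subsetDl. move=> H; exact: H. 
move=> A B; rewrite !E.
have := vs1 A B; have := vs2 A B => h2 h1.
have := lerD h1 h2.
by rewrite addrACA [X in _ <= X]addrACA.
Qed.
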